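(* If $(\alpha,\beta)$ is admissible and non-null, then there exists $x\in(0,1)$ such that $\pi_x(\alpha)=\pi_x(\beta)$.
   Context: $\Omega=\{0,1\}^\infty$ (infinite binary strings $\omega_0\omega_1\cdots$), $S$ the left shift, $\preceq$ the lexicographic order with intervals $[\alpha,\beta]=\{\omega:\alpha\preceq\omega\preceq\beta\}$ and half-open analogues. $(\alpha,\beta)$ is admissible if $\alpha_0=0,\alpha_1=1,\beta_0=1,\beta_1=0$ and $S^n\alpha\notin(\alpha,\beta]$, $S^n\beta\notin[\alpha,\beta)$ for all $n\ge0$. $\Omega_{(\alpha,\beta,-)}=\{\omega:S^n\omega\notin(\alpha,\beta]\ \forall n\ge0\}$, $\Omega_{(\alpha,\beta,+)}=\{\omega:S^n\omega\notin[\alpha,\beta)\ \forall n\ge0\}$, $\Omega_{(\alpha,\beta)}$ their union. With $\Gamma_n=\{\omega_0\cdots\omega_n:\omega\in\Gamma\}$ and $h(\Gamma)=\limsup_n\frac1n\ln|\Gamma_n|$, the admissible pair is non-null if $h(\Omega_{(\alpha,\beta)})>0$. Projection: $\pi_x(\omega)=(1-x)\sum_{k\ge0}\omega_kx^k$ for $x\in[0,1)$. *)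

(* Defs.v *)
From Stdlib Require Import Reals Lra Lia List Arith ClassicalDescription.
From Coquelicot Require Import Coquelicot.
Import ListNotations.
Open Scope R_scope.

(* Omega = {0,1}^infinity : infinite binary strings, 0 = false, 1 = true. *)
Definition Omega := nat -> bool.

Definition shift (w : Omega) : Omega := fun k => w (S k).
Definition shiftn (n : nat) (w : Omega) : Omega := fun k => w (n + k)%nat.

Definition lex_lt (a b : Omega) : Prop :=
  exists n : nat, (forall k, (k < n)%nat -> a k = b k) /\ a n = false /\ b n = true.
Definition lex_le (a b : Omega) : Prop := lex_lt a b \/ (forall k, a k = b k).

Definition in_oc (a b w : Omega) : Prop := lex_lt a w /\ lex_le w b.
Definition in_co (a b w : Omega) : Prop := lex_le a w /\ lex_lt w b.

Definition admissible (alpha beta : Omega) : Prop :=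
  alpha 0%nat = false /\ alpha 1%nat = true /\
  beta 0%nat = true /\ beta 1%nat = false /\
  (forall n, ~ in_oc alpha beta (shiftn n alpha)) /\
  (forall n, ~ in_co alpha beta (shiftn n beta)).

Definition Omega_minus (alpha beta : Omega) (w : Omega) : Prop :=
  forall n, ~ in_oc alpha beta (shiftn n w).
Definition Omega_plus (alpha beta : Omega) (w : Omega) : Prop :=
  forall n, ~ in_co alpha beta (shiftn n w).
Definition Omega_ab (alpha beta : Omega) (w : Omega) : Prop :=
  Omega_minus alpha beta w \/ Omega_plus alpha beta w.

Fixpoint all_words (n : nat) : list (list bool) :=
  match n with
  | O => [[]]
  | S m => map (cons false) (all_words m) ++ map (cons true) (all_words m)
  end.

(* The word w_0 w_1 ... w_n (length n+1). *)
Definition prefix (w : Omega) (n : nat) : list bool := map w (seq 0 (S n)).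

Definition card_prefixes (G : Omega -> Prop) (n : nat) : nat :=
  length (filter (fun l => if excluded_middle_informative
                                (exists w, G w /\ prefix w n = l)
                           then true else false)
                 (all_words (S n))).

Definition entropy (G : Omega -> Prop) : Rbar :=
  LimSup_seq (fun n => ln (INR (card_prefixes G n)) / INR n).

Definition non_null (alpha beta : Omega) : Prop :=
  Rbar_lt (Finite 0) (entropy (Omega_ab alpha beta)).

Definition proj (x : R) (w : Omega) : R :=
  (1 - x) * Series (fun k => if w k then x ^ k else 0).

(* Main.v *)
Require Import Defs.
From Stdlib Require Import Reals.
From Coquelicot Require Import Coquelicot.
Open Scope R_scope.
From Stdlib Require Import Lra Lia List Arith Classical FunctionalExtensionality ClassicalDescription.
Import ListNotations.
Open Scope R_scope.

Definition ocons (c : bool) (v : Omega) : Omega :=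
  fun k => match k with O => c | S k' => v k' end.
Definition ones : Omega := fun _ => true.
Definition flip (w : Omega) : Omega := fun k => negb (w k).

Lemma lex_lt_head (x y : Omega) :
  lex_lt x y <-> (x 0%nat = false /\ y 0%nat = true) \/
                 (x 0%nat = y 0%nat /\ lex_lt (shift x) (shift y)).
Proof.
  split.
  - intros [n [H1 [H2 H3]]]. destruct n as [|n].
    + left; auto.
    + right; split. apply H1; lia.
      exists n; split; [intros k Hk; apply H1; lia|auto].
  - intros [[H1 H2]|[H1 [n [H2 [H3 H4]]]]].
    + exists 0%nat; split; [intros; lia|auto].
    + exists (S n); split; [|auto]. intros [|k] Hk; auto. apply H2; lia.
Qed.

Lemma lex_le_head (x y : Omega) :
  lex_le x y <-> (x 0%nat = false /\ y 0%nat = true) \/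
                 (x 0%nat = y 0%nat /\ lex_le (shift x) (shift y)).
Proof.
  unfold lex_le. rewrite lex_lt_head. split.
  - intros [[H|[H1 H2]]|H]; auto.
    right; split; [apply H|right; intro k; apply H].
  - intros [H|[H1 [H2|H2]]]; auto.
    right; intros [|k]; auto. apply H2.
Qed.

Lemma lex_total (a b : Omega) : lex_lt a b \/ (forall k, a k = b k) \/ lex_lt b a.
Proof.
  destruct (classic (exists k, a k <> b k)) as [H|H].
  - assert (Hd : forall n, a n <> b n \/ ~ a n <> b n).
    { intro n; destruct (Bool.bool_dec (a n) (b n)); [right; tauto|left; auto]. }
    destruct (dec_inh_nat_subset_has_unique_least_element (fun n => a n <> b n) Hd H)
      as [n [[Hn Hmin] _]].
    assert (Hagree : forall k, (k < n)%nat -> a k = b k).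
    { intros k Hk. destruct (Bool.bool_dec (a k) (b k)); auto.
      specialize (Hmin k n0). lia. }
    destruct (a n) eqn:E1; destruct (b n) eqn:E2; try congruence.
    + right; right. exists n; split; auto. intros k Hk; symmetry; auto.
    + left. exists n; auto.
  - right; left. intro k. destruct (Bool.bool_dec (a k) (b k)); auto.
    exfalso; apply H; eauto.
Qed.

Lemma lex_lt_irr_le (a b : Omega) : lex_lt a b -> lex_le b a -> False.
Proof.
  intros [n [H1 [H2 H3]]] [[m [G1 [G2 G3]]]|G].
  - destruct (lt_eq_lt_dec n m) as [[Hl|He]|Hl].
    + rewrite G1 in H3 by lia. congruence.
    + subst; congruence.
    + rewrite H1 in G3 by lia. congruence.
  - rewrite G in H3; congruence.
Qed.

Lemma lex_lt_trans (a b c : Omega) : lex_lt a b -> lex_lt b c -> lex_lt a c.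
Proof.
  intros [n [H1 [H2 H3]]] [m [G1 [G2 G3]]].
  destruct (lt_eq_lt_dec n m) as [[Hl|He]|Hl].
  - exists n; split; [intros k Hk; rewrite H1, G1 by lia; auto|].
    split; auto. rewrite <- G1 by lia; auto.
  - subst; exists m; split; [intros k Hk; rewrite H1, G1 by lia; auto|auto].
  - exists m; split; [intros k Hk; rewrite H1, G1 by lia; auto|].
    split; auto. rewrite H1 by lia; auto.
Qed.

Lemma lex_lt_ext_l (a a' b : Omega) : (forall k, a k = a' k) -> lex_lt a b -> lex_lt a' b.
Proof. intros E [n [H1 [H2 H3]]]. exists n; repeat split; intros; rewrite <- ?E; auto. Qed.
Lemma lex_lt_ext_r (a b b' : Omega) : (forall k, b k = b' k) -> lex_lt a b -> lex_lt a b'.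
Proof. intros E [n [H1 [H2 H3]]]. exists n; repeat split; intros; rewrite <- ?E; auto. Qed.

Lemma lex_le_lt_trans (a b c : Omega) : lex_le a b -> lex_lt b c -> lex_lt a c.
Proof.
  intros [H|H] G. eapply lex_lt_trans; eauto.
  apply (lex_lt_ext_l b); auto.
Qed.
Lemma lex_lt_le_trans (a b c : Omega) : lex_lt a b -> lex_le b c -> lex_lt a c.
Proof.
  intros H [G|G]. eapply lex_lt_trans; eauto.
  apply (lex_lt_ext_r a b); auto.
Qed.
Lemma lex_le_trans (a b c : Omega) : lex_le a b -> lex_le b c -> lex_le a c.
Proof.
  intros [H|H] G. left; eapply lex_lt_le_trans; eauto.
  destruct G as [G|G]. left. apply (lex_lt_ext_l b); auto.
  right; intro k; rewrite H; auto.
Qed.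
Lemma lex_le_refl a : lex_le a a.
Proof. right; auto. Qed.

Lemma not_lt_le a b : ~ lex_lt a b -> lex_le b a.
Proof.
  intro H. destruct (lex_total a b) as [G|[G|G]]; [tauto| |left; auto].
  right; intro; symmetry; auto.
Qed.
Lemma not_le_lt a b : ~ lex_le a b -> lex_lt b a.
Proof.
  intro H. destruct (lex_total a b) as [G|[G|G]]; auto; exfalso; apply H.
  left; auto. right; auto.
Qed.

Lemma flip_lt a b : lex_lt (flip a) (flip b) <-> lex_lt b a.
Proof.
  unfold flip; split; intros [n [H1 [H2 H3]]]; exists n; repeat split.
  - intros k Hk; specialize (H1 k Hk). destruct (a k), (b k); simpl in *; congruence.
  - destruct (b n); simpl in *; congruence.
  - destruct (a n); simpl in *; congruence.
  - intros k Hk; rewrite H1; auto.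
  - rewrite H3; auto.
  - rewrite H2; auto.
Qed.
Lemma flip_le a b : lex_le (flip a) (flip b) <-> lex_le b a.
Proof.
  unfold lex_le; rewrite flip_lt. unfold flip. split; intros [H|H]; auto; right.
  - intro k; specialize (H k); destruct (a k), (b k); simpl in *; congruence.
  - intro k; rewrite H; auto.
Qed.

Lemma Mm_cons a b c v : Omega_minus a b (ocons c v) <->
  ~ in_oc a b (ocons c v) /\ Omega_minus a b v.
Proof.
  split.
  - intro H. split. apply (H 0%nat). intro n. apply (H (S n)).
  - intros [H1 H2] [|n]. apply H1. apply H2.
Qed.

Lemma Mm_shiftn a b w k : Omega_minus a b w -> Omega_minus a b (shiftn k w).
Proof.
  intros H n. replace (shiftn n (shiftn k w)) with (shiftn (k + n) w). apply H.
  apply functional_extensionality; intro j; unfold shiftn; f_equal; lia.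
Qed.

Lemma ones_Mm a b : b 0%nat = true -> b 1%nat = false -> Omega_minus a b ones.
Proof.
  intros Hb0 Hb1 n [_ H]. change (shiftn n ones) with ones in H.
  apply lex_le_head in H. destruct H as [[H _]|[_ H]]. discriminate.
  apply lex_le_head in H. destruct H as [[H _]|[H _]]. discriminate.
  unfold shift, ones in H; simpl in H. congruence.
Qed.

Lemma noc0 a b w : a 0%nat = false -> b 0%nat = true -> w 0%nat = false ->
  (~ in_oc a b w <-> lex_le w a).
Proof.
  intros Ha Hb Hw. unfold in_oc. split.
  - intro H. apply not_lt_le. intro G. apply H; split; auto.
    left. apply lex_lt_head; auto.
  - intros H [G _]. eapply lex_lt_irr_le; eauto.
Qed.

Lemma noc1 a b w : a 0%nat = false -> b 0%nat = true -> w 0%nat = true ->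
  (~ in_oc a b w <-> lex_lt b w).
Proof.
  intros Ha Hb Hw. unfold in_oc. split.
  - intro H. apply not_le_lt. intro G. apply H; split; auto.
    apply lex_lt_head; auto.
  - intros H [_ G]. eapply lex_lt_irr_le; eauto.
Qed.

Lemma F1 a b k : admissible a b -> shiftn k a 0%nat = false -> lex_le (shiftn k a) a.
Proof.
  intros (Ha0&Ha1&Hb0&Hb1&HA&HB) H. apply (noc0 a b); auto.
Qed.
Lemma F2 a b k : admissible a b -> shiftn k b 0%nat = true -> lex_le b (shiftn k b).
Proof.
  intros (Ha0&Ha1&Hb0&Hb1&HA&HB) H. specialize (HB k). unfold in_co in HB.
  apply not_lt_le. intro G. apply HB; split; auto. left; apply lex_lt_head; auto.
Qed.
Lemma F3 a b k : admissible a b -> shiftn k b 0%nat = false -> lex_lt (shiftn k b) a.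
Proof.
  intros (Ha0&Ha1&Hb0&Hb1&HA&HB) H. specialize (HB k). unfold in_co in HB.
  apply not_le_lt. intro G. apply HB; split; auto. apply lex_lt_head; auto.
Qed.

Definition lhd (L : option Omega) : bool := match L with Some l => l 0%nat | None => false end.
Definition Lmap (L : option Omega) : option Omega :=
  match L with Some l => Some (shift l) | None => None end.
Definition Lgt (L : option Omega) (v : Omega) : Prop :=
  match L with Some l => lex_lt l v | None => True end.

Definition step (a b : Omega) (s : option (Omega * option Omega)) (c : bool)
  : option (Omega * option Omega) :=
  match s with
  | None => None
  | Some (R, L) =>
    if c then (if R 0%nat then Some (shift R, if lhd L then Lmap L else Some (shift b)) else None)
    else (if lhd L then None else Some (if R 0%nat then shift a else shift R, Lmap L))
  end.

Definition st a b (u : list bool) := fold_left (step a b) u (Some (ones, None)).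

Definition Inv a b (R : Omega) (L : option Omega) : Prop :=
  (R = ones \/ exists k, R = shiftn k a) /\ (L = None \/ exists k, L = Some (shiftn k b)).

Lemma shift_shiftn w k : shift (shiftn k w) = shiftn (S k) w.
Proof. apply functional_extensionality; intro j; unfold shift, shiftn; f_equal; lia. Qed.

Lemma Inv_step a b R L c R' L' : Inv a b R L -> step a b (Some (R, L)) c = Some (R', L') ->
  Inv a b R' L'.
Proof.
  intros [HR HL] E. simpl in E.
  assert (HR' : (shift R = ones \/ exists k, shift R = shiftn k a)).
  { destruct HR as [->|[k ->]]. left; reflexivity. right; exists (S k); apply shift_shiftn. }
  assert (HL' : Lmap L = None \/ exists k, Lmap L = Some (shiftn k b)).
  { destruct HL as [->|[k ->]]. left; reflexivity. right; exists (S k); simpl; f_equal; apply shift_shiftn. }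
  destruct c.
  - destruct (R 0%nat); [|discriminate]. injection E as <- <-. split; auto.
    destruct (lhd L); auto. right; exists 1%nat; reflexivity.
  - destruct (lhd L); [discriminate|]. injection E as <- <-. split; auto.
    destruct (R 0%nat); auto. right; exists 1%nat; reflexivity.
Qed.

Lemma Inv_st a b u R L : st a b u = Some (R, L) -> Inv a b R L.
Proof.
  revert R L. induction u as [|c u IH] using rev_ind; intros R L E.
  - injection E as <- <-. split; left; reflexivity.
  - unfold st in E. rewrite fold_left_app in E. simpl in E.
    fold (st a b u) in E. destruct (st a b u) as [[R0 L0]|] eqn:E0; [|discriminate].
    eapply Inv_step; eauto.
Qed.

Lemma Mm_R a b R L : admissible a b -> Inv a b R L -> Omega_minus a b R.
Proof.
  intros Had [[->|[k ->]] _].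
  - destruct Had as (?&?&?&?&?&?). apply ones_Mm; auto.
  - apply Mm_shiftn. destruct Had as (?&?&?&?&?&?). auto.
Qed.

Lemma R_le a b R L : admissible a b -> Inv a b R L -> R 0%nat = false -> lex_le R a.
Proof.
  intros Had [[->|[k ->]] _] H. discriminate. apply (F1 a b); auto.
Qed.
Lemma L_ge a b R L l : admissible a b -> Inv a b R L -> L = Some l -> l 0%nat = true -> lex_le b l.
Proof.
  intros Had [_ [->|[k ->]]] E H. discriminate. injection E as <-. apply (F2 a b); auto.
Qed.
Lemma L_lt a b R L l : admissible a b -> Inv a b R L -> L = Some l -> l 0%nat = false -> lex_lt l a.
Proof.
  intros Had [_ [->|[k ->]]] E H. discriminate. injection E as <-. apply (F3 a b); auto.
Qed.

Lemma one_step a b R L c v : admissible a b -> Inv a b R L ->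
  (Omega_minus a b (ocons c v) /\ Lgt L (ocons c v) /\ lex_le (ocons c v) R) <->
  (Omega_minus a b v /\ exists R' L', step a b (Some (R, L)) c = Some (R', L') /\
      Lgt L' v /\ lex_le v R').
Proof.
  intros Had HI. pose proof Had as (Ha0&Ha1&Hb0&Hb1&HA&HB).
  rewrite Mm_cons. simpl step.
  destruct c.
  - rewrite (noc1 a b); auto.
    assert (Eb : lex_lt b (ocons true v) <-> lex_lt (shift b) v).
    { rewrite lex_lt_head; simpl. rewrite Hb0. split; [intros [[? ?]|[? ?]]; auto; discriminate|auto]. }
    rewrite Eb.
    destruct (R 0%nat) eqn:ER.
    + assert (ER' : lex_le (ocons true v) R <-> lex_le v (shift R)).
      { rewrite lex_le_head; simpl. rewrite ER. split; [intros [[? ?]|[? ?]]; auto; discriminate|auto]. }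
      rewrite ER'.
      destruct L as [l|]; simpl.
      * destruct (l 0%nat) eqn:El.
        -- assert (El' : lex_lt l (ocons true v) <-> lex_lt (shift l) v).
           { rewrite lex_lt_head; simpl. rewrite El. split; [intros [[? ?]|[? ?]]; auto; discriminate|auto]. }
           rewrite El'. split.
           ++ intros [[_ H1] [H2 H3]]. split; auto. eexists; eexists; split; [reflexivity|auto].
           ++ intros [H1 [R' [L' [E [H2 H3]]]]]. injection E as <- <-. simpl in H2.
              repeat split; auto. eapply lex_le_lt_trans; [|exact H2].
              pose proof (L_ge a b R (Some l) l Had HI eq_refl El) as G.
              apply lex_le_head in G. destruct G as [[G _]|[_ G]]; [congruence|auto].
        -- assert (El' : lex_lt l (ocons true v)). { apply lex_lt_head; simpl; auto. }
           split.
           ++ intros [[H0 H1] [H2 H3]]. split; auto. eexists; eexists; split; [reflexivity|auto].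
           ++ intros [H1 [R' [L' [E [H2 H3]]]]]. injection E as <- <-. simpl in H2. tauto.
      * split.
        -- intros [[H0 H1] [H2 H3]]. split; auto. eexists; eexists; split; [reflexivity|simpl; auto].
        -- intros [H1 [R' [L' [E [H2 H3]]]]]. injection E as <- <-. simpl in H2. tauto.
    + split.
      * intros [_ [_ H]]. apply lex_le_head in H; simpl in H. rewrite ER in H.
        destruct H as [[? ?]|[? ?]]; discriminate.
      * intros [_ [R' [L' [E _]]]]. discriminate.
  - rewrite (noc0 a b); auto.
    assert (Ea : lex_le (ocons false v) a <-> lex_le v (shift a)).
    { rewrite lex_le_head; simpl. rewrite Ha0. split; [intros [[? ?]|[? ?]]; auto; discriminate|auto]. }
    rewrite Ea.
    assert (HLg : Lgt L (ocons false v) <-> lhd L = false /\ Lgt (Lmap L) v).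
    { destruct L as [l|]; simpl; [|tauto].
      rewrite lex_lt_head; simpl. destruct (l 0%nat) eqn:El; split; intro H.
      - destruct H as [[H1 H2]|[H1 H2]]; congruence.
      - destruct H; congruence.
      - destruct H as [[H1 H2]|[H1 H2]]; [congruence|split; auto].
      - right; split; [reflexivity|tauto]. }
    rewrite HLg.
    destruct (R 0%nat) eqn:ER.
    + assert (ER' : lex_le (ocons false v) R). { left; apply lex_lt_head; simpl; auto. }
      destruct (lhd L) eqn:EL.
      * split; [intros [_ [[? _] _]]; discriminate|intros [_ [? [? [E _]]]]; discriminate].
      * split.
        -- intros [[H0 H1] [[_ H2] H3]]. split; auto. eexists; eexists; split; [reflexivity|auto].
        -- intros [H1 [R' [L' [E [H2 H3]]]]]. injection E as <- <-. tauto.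
    + assert (ER' : lex_le (ocons false v) R <-> lex_le v (shift R)).
      { rewrite lex_le_head; simpl. rewrite ER. split; [intros [[? ?]|[? ?]]; auto; discriminate|auto]. }
      rewrite ER'.
      destruct (lhd L) eqn:EL.
      * split; [intros [_ [[? _] _]]; discriminate|intros [_ [? [? [E _]]]]; discriminate].
      * split.
        -- intros [[H0 H1] [[_ H2] H3]]. split; auto. eexists; eexists; split; [reflexivity|auto].
        -- intros [H1 [R' [L' [E [H2 H3]]]]]. injection E as <- <-. repeat split; auto.
           eapply lex_le_trans; [exact H3|].
           pose proof (R_le a b R L Had HI ER) as G.
           apply lex_le_head in G. destruct G as [[_ G]|[_ G]]; [congruence|auto].
Qed.

Fixpoint app (u : list bool) (v : Omega) : Omega :=
  match u with [] => v | c :: u' => ocons c (app u' v) end.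

Lemma app_snoc u c v : app (u ++ [c]) v = app u (ocons c v).
Proof. induction u; simpl; auto. rewrite IHu; auto. Qed.

Definition Cst a b u v := exists R L, st a b u = Some (R, L) /\ Lgt L v /\ lex_le v R.

Lemma lex_le_ones v : lex_le v ones.
Proof.
  destruct (lex_total v ones) as [H|[H|H]]. left; auto. right; auto.
  destruct H as [n [_ [H _]]]. discriminate.
Qed.

Lemma key a b u v : admissible a b ->
  (Omega_minus a b (app u v) <-> Omega_minus a b v /\ Cst a b u v).
Proof.
  intro Had. revert v. induction u as [|c u IH] using rev_ind; intro v.
  - simpl. unfold Cst, st. simpl. split; [intro H; split; auto|tauto].
    exists ones, None; repeat split; auto. apply lex_le_ones.
  - rewrite app_snoc, IH. unfold Cst. unfold st at 2. rewrite fold_left_app. simpl.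
    fold (st a b u). split.
    + intros [H1 [R [L [E [H2 H3]]]]]. rewrite E.
      pose proof (Inv_st a b u R L E) as HI.
      apply (one_step a b R L c v Had HI). auto.
    + intros [H1 [R' [L' [E [H2 H3]]]]].
      destruct (st a b u) as [[R L]|] eqn:E0; [|discriminate].
      pose proof (Inv_st a b u R L E0) as HI.
      assert (G : Omega_minus a b (ocons c v) /\ Lgt L (ocons c v) /\ lex_le (ocons c v) R).
      { apply (one_step a b R L c v Had HI). split; auto. exists R', L'; auto. }
      destruct G as [G1 [G2 G3]]. split; auto. exists R, L; auto.
Qed.

Definition pref (w : Omega) (n : nat) : list bool := map w (seq 0 n).

Lemma map_seq_shift (w : Omega) m n : map w (seq m n) = map (fun k => w (m + k)%nat) (seq 0 n).
Proof.
  revert m w; induction n; intros m w; simpl; auto. f_equal. f_equal; lia.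
  rewrite IHn. rewrite (IHn 1%nat (fun k => w (m + k)%nat)). apply map_ext; intro; f_equal; lia.
Qed.

Lemma pref_S w n : pref w (S n) = w 0%nat :: pref (shift w) n.
Proof. unfold pref. simpl. f_equal. rewrite map_seq_shift. reflexivity. Qed.

Lemma pref_app u v : pref (app u v) (length u) = u.
Proof.
  induction u; simpl; auto. rewrite pref_S. simpl. f_equal. exact IHu.
Qed.

Lemma pref_length w n : length (pref w n) = n.
Proof. unfold pref. rewrite length_map, length_seq; auto. Qed.

Lemma app_pref w u : pref w (length u) = u -> w = app u (shiftn (length u) w).
Proof.
  revert w; induction u as [|c u IH]; intros w H.
  - apply functional_extensionality; intro k; reflexivity.
  - simpl in H. rewrite pref_S in H. injection H as H0 H1.
    apply IH in H1. apply functional_extensionality; intros [|k]; simpl; auto.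
    change (shift w k = app u (shiftn (length u) (shift w)) k). rewrite <- H1; auto.
Qed.

Definition valid a b (u : list bool) := exists w, Omega_minus a b w /\ pref w (length u) = u.

Lemma valid_iff a b u : admissible a b ->
  (valid a b u <-> exists v, Omega_minus a b v /\ Cst a b u v).
Proof.
  intro Had; split.
  - intros [w [H1 H2]]. exists (shiftn (length u) w). apply key; auto.
    rewrite <- app_pref; auto.
  - intros [v H]. exists (app u v). split. apply key; auto. apply pref_app.
Qed.

Lemma valid_snoc a b u c : admissible a b ->
  (valid a b (u ++ [c]) <-> exists v, Omega_minus a b v /\ v 0%nat = c /\ Cst a b u v).
Proof.
  intro Had. rewrite valid_iff by auto. split.
  - intros [v [H1 H2]]. exists (ocons c v). assert (G := proj2 (key a b (u ++ [c]) v Had) (conj H1 H2)).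
    rewrite app_snoc in G. apply key in G; auto. destruct G; auto.
  - intros [v [H1 [H2 H3]]]. 
    assert (Ev : v = ocons c (shift v)).
    { apply functional_extensionality; intros [|k]; simpl; auto. }
    assert (G : Omega_minus a b (app u v)) by (apply key; auto).
    rewrite Ev, <- app_snoc in G. apply key in G; auto. exists (shift v); auto.
Qed.

Lemma valid_prefix a b u c : admissible a b -> valid a b (u ++ [c]) -> valid a b u.
Proof.
  intros Had H. apply valid_snoc in H; auto. apply valid_iff; auto.
  destruct H as [v [H1 [_ H3]]]; eauto.
Qed.

Lemma cases a b u R L : admissible a b -> valid a b u -> st a b u = Some (R, L) ->
  ~ (R 0%nat = false /\ lhd L = true) /\
  (valid a b (u ++ [false]) <-> lhd L = false) /\
  (valid a b (u ++ [true]) <-> R 0%nat = true).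
Proof.
  intros Had Hv E. pose proof (Inv_st a b u R L E) as HI.
  pose proof Had as (Ha0&Ha1&Hb0&Hb1&HA&HB).
  apply valid_iff in Hv; auto. destruct Hv as [v [Hv [R1 [L1 [E1 [H1 H2]]]]]].
  rewrite E in E1. injection E1 as <- <-.
  assert (Rv : R 0%nat = false -> v 0%nat = false).
  { intro HR. apply lex_le_head in H2. destruct (v 0%nat) eqn:Ev; auto.
    destruct H2 as [[? ?]|[? ?]]; congruence. }
  assert (Lv : lhd L = true -> v 0%nat = true).
  { destruct L as [l|]; simpl; [|discriminate]. intro Hl. simpl in H1.
    apply lex_lt_head in H1. destruct (v 0%nat) eqn:Ev; auto.
    destruct H1 as [[? ?]|[? ?]]; congruence. }
  split; [|split].
  - intros [X Y]. apply Rv in X. apply Lv in Y. congruence.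
  - rewrite valid_snoc by auto. split.
    + intros [v' [G1 [G2 [R' [L' [E' [G3 G4]]]]]]]. rewrite E in E'. injection E' as <- <-.
      destruct L as [l|]; simpl in *; auto. destruct (l 0%nat) eqn:El; auto.
      apply lex_lt_head in G3. destruct G3 as [[? ?]|[? ?]]; congruence.
    + intro HL. destruct (R 0%nat) eqn:ER.
      * exists a. split; [|split]; auto.
        exists R, L; split; auto. split.
        -- destruct L as [l|]; simpl; auto. simpl in HL.
           eapply L_lt; eauto.
        -- left; apply lex_lt_head; auto.
      * exists v; split; auto. split; auto. exists R, L; auto.
  - rewrite valid_snoc by auto. split.
    + intros [v' [G1 [G2 [R' [L' [E' [G3 G4]]]]]]]. rewrite E in E'. injection E' as <- <-.
      apply lex_le_head in G4. destruct (R 0%nat); auto.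
      destruct G4 as [[? ?]|[? ?]]; congruence.
    + intro HR. destruct (lhd L) eqn:HL.
      * exists v; split; auto. split; auto. exists R, L; auto.
      * exists R. split; [eapply Mm_R; eauto|]. split; auto. exists R, L; split; auto.
        split; [|apply lex_le_refl].
        destruct L as [l|]; simpl; auto. simpl in HL. apply lex_lt_head; auto.
Qed.

Lemma st_snoc a b u c : st a b (u ++ [c]) = step a b (st a b u) c.
Proof. unfold st. rewrite fold_left_app. reflexivity. Qed.

Lemma valid_st a b u : admissible a b -> valid a b u -> exists R L, st a b u = Some (R, L).
Proof.
  intros Had H. apply valid_iff in H; auto. destruct H as [v [_ [R [L [E _]]]]]; eauto.
Qed.

Lemma valid_nil a b : admissible a b -> valid a b [].
Proof.
  intro Had. exists ones. split; auto. destruct Had as (?&?&?&?&?&?). apply ones_Mm; auto.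
Qed.

Lemma app_eq_len {A : Type} (l1 l2 m1 m2 : list A) :
  length l1 = length m1 -> l1 ++ l2 = m1 ++ m2 -> l1 = m1 /\ l2 = m2.
Proof.
  revert m1; induction l1 as [|x l1 IH]; intros [|y m1] Hl He; simpl in *; try discriminate; auto.
  injection He as -> He. injection Hl as Hl. destruct (IH m1 Hl He) as [-> ->]; auto.
Qed.

Lemma valid_app a b u v : admissible a b -> valid a b (u ++ v) -> valid a b u /\ valid a b v.
Proof.
  intros Had [w [H1 H2]]. rewrite length_app in H2.
  unfold pref in H2. rewrite seq_app, map_app in H2. simpl in H2.
  apply app_eq_len in H2. 2: now rewrite length_map, length_seq.
  destruct H2 as [H2 H3]. split.
  - exists w; split; auto.
  - exists (shiftn (length u) w). split. apply Mm_shiftn; auto.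
    unfold pref. rewrite map_seq_shift in H3. exact H3.
Qed.

Definition tm (x : R) (w : Omega) := fun k => if w k then x ^ k else 0.

Lemma ex_tm x w : 0 <= x < 1 -> ex_series (tm x w).
Proof.
  intro Hx. apply (@ex_series_le R_AbsRing R_CompleteNormedModule _ (fun k => x ^ k)).
  - intro n. change norm with Rabs. simpl. unfold tm. destruct (w n).
    + rewrite Rabs_pos_eq; [lra|apply pow_le; lra].
    + rewrite Rabs_R0. apply pow_le; lra.
  - apply ex_series_geom. rewrite Rabs_pos_eq; lra.
Qed.

Lemma Series_geom x : 0 <= x < 1 -> Series (fun k => x ^ k) = / (1 - x).
Proof. intro; apply is_series_unique, is_series_geom. rewrite Rabs_pos_eq; lra. Qed.

Lemma proj_rec x w : 0 <= x < 1 ->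
  proj x w = (1 - x) * (if w 0%nat then 1 else 0) + x * proj x (shift w).
Proof.
  intro Hx. unfold proj. fold (tm x w). fold (tm x (shift w)).
  rewrite Series_incr_1 by (apply ex_tm; auto).
  rewrite (Series_ext _ (fun k => x * tm x (shift w) k)).
  2: { intro n. unfold tm, shift. destruct (w (S n)); simpl; ring. }
  rewrite Series_scal_l. unfold tm at 1. destruct (w 0%nat); simpl; ring.
Qed.

Lemma Series_zero : Series (fun _ => 0) = 0.
Proof.
  rewrite (Series_ext _ (fun n => 0 * (fun _ => 0) n)) by (intro; simpl; ring).
  rewrite Series_scal_l; ring.
Qed.

Lemma Series_tm_bounds x w : 0 <= x < 1 -> 0 <= Series (tm x w) <= / (1 - x).
Proof.
  intro Hx. split.
  - rewrite <- Series_zero. apply Series_le.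
    intro n; unfold tm; destruct (w n); split; try lra; apply pow_le; lra.
    apply ex_tm; auto.
  - rewrite <- Series_geom by auto. apply Series_le.
    intro n; unfold tm; destruct (w n); split; try lra; apply pow_le; lra.
    apply ex_series_geom. rewrite Rabs_pos_eq; lra.
Qed.

Lemma proj_bounds x w : 0 <= x < 1 -> 0 <= proj x w <= 1.
Proof.
  intro Hx. unfold proj. fold (tm x w). pose proof (Series_tm_bounds x w Hx) as [H1 H2].
  split. apply Rmult_le_pos; lra.
  apply (Rmult_le_compat_l (1 - x)) in H2; [|lra].
  rewrite Rinv_r in H2 by lra. lra.
Qed.

Lemma proj_ones x : 0 <= x < 1 -> proj x ones = 1.
Proof.
  intro Hx. unfold proj. rewrite (Series_ext _ (fun k => x ^ k)) by (intro; reflexivity).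
  rewrite Series_geom by auto. field. lra.
Qed.

Lemma proj_flip x w : 0 <= x < 1 -> proj x (flip w) = 1 - proj x w.
Proof.
  intro Hx. unfold proj. fold (tm x w).
  rewrite (Series_ext _ (fun k => x ^ k - tm x w k)).
  2: { intro n; unfold tm, flip; destruct (w n); simpl; ring. }
  rewrite Series_minus. rewrite Series_geom by auto. field. lra.
  apply ex_series_geom. rewrite Rabs_pos_eq; lra. apply ex_tm; auto.
Qed.

Lemma proj_zero w : proj 0 w = if w 0%nat then 1 else 0.
Proof.
  rewrite proj_rec by lra. destruct (w 0%nat); ring.
Qed.

Lemma proj_shift0 x w : 0 < x < 1 -> w 0%nat = false -> proj x (shift w) = proj x w / x.
Proof.
  intros Hx H. rewrite (proj_rec x w) by lra. rewrite H. field. lra.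
Qed.
Lemma proj_shift1 x w : 0 < x < 1 -> w 0%nat = true -> proj x (shift w) = (proj x w - (1 - x)) / x.
Proof.
  intros Hx H. rewrite (proj_rec x w) by lra. rewrite H. field. lra.
Qed.

Lemma proj_cont w x : -1 < x < 1 -> continuity_pt (fun y => proj y w) x.
Proof.
  intro Hx.
  set (a := fun k => if w k then 1 else 0).
  assert (E : forall y, proj y w = (1 - y) * PSeries a y).
  { intro y. unfold proj, PSeries. f_equal. apply Series_ext. intro n; unfold a.
    destruct (w n); ring. }
  apply (continuity_pt_ext (fun y => (1 - y) * PSeries a y)). intro; rewrite E; auto.
  apply continuity_pt_mult.
  - apply continuity_pt_minus. apply continuity_pt_const. intros ? ?; auto. apply continuity_pt_id.
  - apply PSeries_continuity.
    destruct (CV_radius_bounded a) as [Hub Hlub].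
    set (r := (Rabs x + 1) / 2).
    assert (Hr : Rbar_le r (CV_radius a)).
    { apply Hub. exists 1. intro n. unfold a. rewrite Rabs_mult.
      assert (Rabs r ^ n <= 1). { rewrite <- (pow1 n). apply pow_incr. split. apply Rabs_pos.
        unfold r. rewrite Rabs_pos_eq. assert (Rabs x < 1) by (apply Rabs_def1; lra). lra.
        assert (0 <= Rabs x) by apply Rabs_pos. lra. }
      rewrite <- RPow_abs. destruct (w n); rewrite ?Rabs_R1, ?Rabs_R0; lra. }
    assert (Rabs x < 1) by (apply Rabs_def1; lra).
    apply (Rbar_lt_le_trans _ r). simpl. unfold r; lra. auto.
Qed.

Definition ind (P : Prop) : R := if excluded_middle_informative P then 1 else 0.
Definition sumw (n : nat) (f : list bool -> R) : R := fold_right Rplus 0 (map f (all_words n)).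

Lemma fold_app l1 l2 : fold_right Rplus 0 (l1 ++ l2) = fold_right Rplus 0 l1 + fold_right Rplus 0 l2.
Proof. induction l1; simpl; [ring|rewrite IHl1; ring]. Qed.

Lemma sumw_S n f : sumw (S n) f = sumw n (fun u => f (false :: u)) + sumw n (fun u => f (true :: u)).
Proof. unfold sumw. simpl. rewrite map_app, fold_app, !map_map. reflexivity. Qed.

Lemma sumw_0 f : sumw 0 f = f [].
Proof. unfold sumw; simpl; ring. Qed.

Lemma sumw_plus n f g : sumw n (fun u => f u + g u) = sumw n f + sumw n g.
Proof. revert f g; induction n; intros f g. rewrite !sumw_0; ring.
  rewrite !sumw_S, !IHn. ring. Qed.

Lemma sumw_scal n c f : sumw n (fun u => c * f u) = c * sumw n f.
Proof. revert f; induction n; intros f. rewrite !sumw_0; ring.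
  rewrite !sumw_S, !IHn. ring. Qed.

Lemma sumw_le n f g : (forall u, f u <= g u) -> sumw n f <= sumw n g.
Proof. revert f g; induction n; intros f g H. rewrite !sumw_0; auto.
  rewrite !sumw_S. apply Rplus_le_compat; apply IHn; auto. Qed.

Lemma sumw_ext n f g : (forall u, f u = g u) -> sumw n f = sumw n g.
Proof. intro H. apply Rle_antisym; apply sumw_le; intro u; rewrite H; lra. Qed.

Lemma sumw_snoc n f : sumw (S n) f = sumw n (fun u => f (u ++ [false]) + f (u ++ [true])).
Proof.
  revert f; induction n; intro f.
  - rewrite sumw_S, !sumw_0. reflexivity.
  - rewrite (sumw_S (S n) f), (IHn (fun u => f (false :: u))), (IHn (fun u => f (true :: u))).
    rewrite (sumw_S n). reflexivity.
Qed.

Lemma sumw_app m k f : sumw (m + k) f = sumw m (fun u => sumw k (fun v => f (u ++ v))).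
Proof.
  revert f; induction m; intro f.
  - rewrite sumw_0. reflexivity.
  - change (S m + k)%nat with (S (m + k)). rewrite (sumw_S (m + k) f), !IHm.
    rewrite (sumw_S m). reflexivity.
Qed.

Lemma sumw_one n : sumw n (fun _ => 1) = 2 ^ n.
Proof. induction n. rewrite sumw_0; simpl; ring. rewrite sumw_S, IHn; simpl; ring. Qed.

Lemma sumw_negb n f : sumw n (fun u => f (map negb u)) = sumw n f.
Proof.
  revert f; induction n; intro f.
  - rewrite !sumw_0; reflexivity.
  - rewrite !sumw_S. simpl.
    rewrite (IHn (fun u => f (true :: u))), (IHn (fun u => f (false :: u))). ring.
Qed.

Lemma ind_true (P : Prop) : P -> ind P = 1.
Proof. intro H; unfold ind; destruct (excluded_middle_informative P); tauto. Qed.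
Lemma ind_false (P : Prop) : ~ P -> ind P = 0.
Proof. intro H; unfold ind; destruct (excluded_middle_informative P); tauto. Qed.
Lemma ind_iff (P Q : Prop) : (P <-> Q) -> ind P = ind Q.
Proof. intro H; unfold ind; destruct (excluded_middle_informative P), (excluded_middle_informative Q); tauto. Qed.
Lemma ind_bounds P : 0 <= ind P <= 1.
Proof. unfold ind; destruct (excluded_middle_informative P); lra. Qed.

Definition projL x (L : option Omega) := match L with Some l => proj x l | None => 0 end.
Definition Wf a b x u := match st a b u with Some (R, L) => proj x R - projL x L | None => 0 end.
Definition Dd a b x := proj x b - proj x a.
Definition Nc a b n := sumw n (fun u => ind (valid a b u)).
Definition Sg a b x n := sumw n (fun u => ind (valid a b u) * Wf a b x u).

Lemma per_u a b x u : admissible a b -> 0 < x < 1 ->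
  ind (valid a b (u ++ [false])) * Wf a b x (u ++ [false]) +
  ind (valid a b (u ++ [true])) * Wf a b x (u ++ [true]) =
  (ind (valid a b u) * Wf a b x u - Dd a b x *
    (ind (valid a b (u ++ [false])) + ind (valid a b (u ++ [true])) - ind (valid a b u))) / x
  /\ ind (valid a b u) <= ind (valid a b (u ++ [false])) + ind (valid a b (u ++ [true])).
Proof.
  intros Had Hx.
  destruct (classic (valid a b u)) as [Hv|Hv].
  2: { rewrite !ind_false; auto. split; [field; lra|lra].
       all: intro G; apply Hv; eapply valid_prefix; eauto. }
  destruct (valid_st a b u Had Hv) as [R [L E]].
  destruct (cases a b u R L Had Hv E) as [Hc [H0 H1]].
  pose proof Had as (Ha0&Ha1&Hb0&Hb1&HA&HB).
  unfold Wf. rewrite !st_snoc, E. simpl step. rewrite (ind_true (valid a b u)) by auto.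
  unfold Dd.
  destruct (R 0%nat) eqn:ER; destruct (lhd L) eqn:EL.
  - rewrite (ind_false (valid a b (u ++ [false]))) by (rewrite H0; discriminate).
    rewrite (ind_true (valid a b (u ++ [true]))) by (rewrite H1; auto).
    split; [|lra]. destruct L as [l|]; simpl in EL; [|discriminate]. simpl.
    rewrite !proj_shift1 by auto. field; lra.
  - rewrite (ind_true (valid a b (u ++ [false]))) by (rewrite H0; auto).
    rewrite (ind_true (valid a b (u ++ [true]))) by (rewrite H1; auto).
    split; [|lra].
    rewrite proj_shift0 by auto. rewrite (proj_shift1 x R) by auto.
    destruct L as [l|]; simpl in *.
    + rewrite (proj_shift1 x b) by auto. rewrite proj_shift0 by auto. field; lra.
    + rewrite (proj_shift1 x b) by auto. field; lra.
  - exfalso; tauto.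
  - rewrite (ind_true (valid a b (u ++ [false]))) by (rewrite H0; auto).
    rewrite (ind_false (valid a b (u ++ [true]))) by (rewrite H1; discriminate).
    split; [|lra].
    rewrite proj_shift0 by auto.
    destruct L as [l|]; simpl in *.
    + rewrite proj_shift0 by auto. field; lra.
    + field; lra.
Qed.

Lemma Sg_S a b x n : admissible a b -> 0 < x < 1 ->
  Sg a b x (S n) = (Sg a b x n - Dd a b x * (Nc a b (S n) - Nc a b n)) / x.
Proof.
  intros Had Hx. unfold Sg, Nc. rewrite !sumw_snoc.
  rewrite (sumw_ext n _ (fun u => (/ x) * (ind (valid a b u) * Wf a b x u) + (- Dd a b x / x) *
     ((ind (valid a b (u ++ [false])) + ind (valid a b (u ++ [true]))) + (-1) * ind (valid a b u)))).
  2: { intro u. rewrite (proj1 (per_u a b x u Had Hx)). field. lra. }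
  rewrite sumw_plus, !sumw_scal, sumw_plus, sumw_scal. field. lra.
Qed.

Lemma Nc_mono a b n : admissible a b -> Nc a b n <= Nc a b (S n).
Proof.
  intro Had. unfold Nc. rewrite sumw_snoc. apply sumw_le. intro u.
  apply (per_u a b (1/2) u Had). lra.
Qed.

Fixpoint sumn (f : nat -> R) (n : nat) : R := match n with O => 0 | S n => sumn f n + f n end.

Lemma Nc_0 a b : admissible a b -> Nc a b 0 = 1.
Proof. intro Had. unfold Nc. rewrite sumw_0. apply ind_true, valid_nil; auto. Qed.

Lemma Sg_0 a b x : admissible a b -> 0 < x < 1 -> Sg a b x 0 = 1.
Proof.
  intros Had Hx. unfold Sg. rewrite sumw_0. rewrite ind_true by (apply valid_nil; auto).
  unfold Wf, st. simpl. rewrite proj_ones by lra. ring.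
Qed.

Lemma identity a b x n : admissible a b -> 0 < x < 1 ->
  x ^ n * Sg a b x n = 1 - Dd a b x * sumn (fun m => (Nc a b (S m) - Nc a b m) * x ^ m) n.
Proof.
  intros Had Hx. induction n.
  - simpl. rewrite Sg_0 by auto. ring.
  - rewrite Sg_S by auto. simpl sumn. simpl pow.
    replace (x * x ^ n * ((Sg a b x n - Dd a b x * (Nc a b (S n) - Nc a b n)) / x))
      with (x ^ n * Sg a b x n - Dd a b x * ((Nc a b (S n) - Nc a b n) * x ^ n)) by (field; lra).
    rewrite IHn. ring.
Qed.

Lemma Sg_lower a b x n : admissible a b -> 0 < x < 1 -> - Nc a b n <= Sg a b x n.
Proof.
  intros Had Hx. unfold Sg, Nc.
  replace (- sumw n (fun u => ind (valid a b u))) with (-1 * sumw n (fun u => ind (valid a b u))) by ring.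
  rewrite <- sumw_scal. apply sumw_le. intro u.
  destruct (classic (valid a b u)) as [Hv|Hv].
  - rewrite ind_true by auto. destruct (valid_st a b u Had Hv) as [R [L E]].
    unfold Wf; rewrite E. pose proof (proj_bounds x R). 
    assert (0 <= projL x L <= 1) by (destruct L; simpl; [apply proj_bounds|]; lra).
    assert (0 <= proj x R <= 1) by (apply proj_bounds; lra). lra.
  - rewrite ind_false by auto. lra.
Qed.

Lemma Nc_submult a b m k : admissible a b -> Nc a b (m + k) <= Nc a b m * Nc a b k.
Proof.
  intro Had. unfold Nc at 1. rewrite sumw_app.
  unfold Nc. rewrite Rmult_comm, <- sumw_scal. apply sumw_le. intro u.
  rewrite Rmult_comm, <- sumw_scal. apply sumw_le. intro v.
  destruct (classic (valid a b (u ++ v))) as [H|H].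
  - destruct (valid_app a b u v Had H). rewrite !ind_true; auto; lra.
  - rewrite ind_false by auto. pose proof (ind_bounds (valid a b u)). pose proof (ind_bounds (valid a b v)).
    nra.
Qed.

Lemma Nc_le_pow a b n : Nc a b n <= 2 ^ n.
Proof. unfold Nc. rewrite <- sumw_one. apply sumw_le. intro; apply ind_bounds. Qed.

Lemma bernoulli h n : -1 <= h -> 1 + INR n * h <= (1 + h) ^ n.
Proof.
  intro Hh. induction n. simpl; lra.
  rewrite S_INR. simpl. assert (0 <= INR n) by apply pos_INR.
  assert (0 <= INR n * h * h) by (rewrite Rmult_assoc; apply Rmult_le_pos; [lra|nra]). nra.
Qed.

Lemma sumn_mono f K n : (forall m, 0 <= f m) -> (K <= n)%nat -> sumn f K <= sumn f n.
Proof.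
  intros Hf Hk. induction Hk. lra. simpl. specialize (Hf m). lra.
Qed.

Lemma sumn_nonneg f n : (forall m, 0 <= f m) -> 0 <= sumn f n.
Proof. intro Hf. induction n; simpl; [lra|]. specialize (Hf n); lra. Qed.

Lemma sumn_ge f K c : (forall m, (m < K)%nat -> c <= f m) -> INR K * c <= sumn f K.
Proof.
  induction K; intro H. simpl; lra.
  rewrite S_INR. simpl. assert (c <= f K) by (apply H; lia).
  assert (INR K * c <= sumn f K) by (apply IHK; intros; apply H; lia). lra.
Qed.

Lemma cont_lb D r : continuity_pt D r -> 0 < D r ->
  exists eta, 0 < eta /\ forall x, Rabs (x - r) < eta -> D r / 2 < D x.
Proof.
  intros Hc Hp. unfold continuity_pt, continue_in, limit1_in, limit_in in Hc.
  destruct (Hc (D r / 2)) as [eta [He H]]; [lra|].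
  exists eta; split; auto. intros x Hx.
  destruct (Req_dec x r) as [->|Hne]. lra.
  assert (G : dist R_met (D x) (D r) < D r / 2).
  { apply H. split. split. constructor. auto. simpl. unfold R_dist. auto. }
  simpl in G. unfold R_dist in G. apply Rabs_def2 in G. lra.
Qed.

Lemma abel (N : nat -> R) x K : 0 < x ->
  x * sumn (fun m => (N (S m) - N m) * x ^ m) K =
  (1 - x) * sumn (fun m => N m * x ^ m) K + N K * x ^ K - N 0%nat.
Proof.
  intro Hx. induction K. simpl; ring.
  simpl sumn. rewrite Rmult_plus_distr_l, IHK. simpl pow. ring.
Qed.

Lemma endgame (N : nat -> R) (D : R -> R) (c r : R) :
  N 0%nat = 1 ->
  (forall n, N n <= N (S n)) ->
  (forall m k, N (m + k)%nat <= N m * N k) ->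
  (forall n, N n <= 2 ^ n) ->
  0 < c -> 1 < r ->
  (forall K, exists n, (K <= n)%nat /\ c * r ^ n <= N n) ->
  (forall x, 0 < x < 1 -> 0 < D x) ->
  (forall x, 0 < x < 1 -> continuity_pt D x) ->
  (forall x n, 0 < x < 1 ->
     D x * sumn (fun m => (N (S m) - N m) * x ^ m) n <= 1 + x ^ n * N n) ->
  False.
Proof.
  intros N0 Nmono Nsub N2 Hc Hr Hgrow Dpos Dcont Hid.
  assert (N1 : forall n, 1 <= N n).
  { induction n; [lra|]. specialize (Nmono n); lra. }
  set (E := fun x => 0 <= x /\ exists k, (1 <= k)%nat /\ x ^ k * N k < 1).
  assert (Eb : forall x, E x -> x < 1).
  { intros x [Hx [k [Hk H]]]. destruct (Rlt_or_le x 1) as [|H1]; auto.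
    exfalso. assert (1 <= x ^ k) by (rewrite <- (pow1 k); apply pow_incr; lra).
    specialize (N1 k). nra. }
  assert (E4 : E (1/4)).
  { split; [lra|]. exists 1%nat; split; auto. simpl. specialize (N2 1%nat). simpl in N2. lra. }
  assert (Ebnd : forall x k, (1 <= k)%nat -> 0 <= x -> x ^ k * N k <= 1 -> forall n, x ^ n * N n <= 2 ^ k).
  { intros x k Hk1 Hx Hk n. induction n as [n IH] using lt_wf_ind.
    destruct (lt_dec n k) as [Hl|Hl].
    - assert (x <= 1 \/ 1 < x) as [Hx1|Hx1] by lra.
      + assert (x ^ n <= 1) by (rewrite <- (pow1 n); apply pow_incr; lra).
        assert (N n <= 2 ^ n) by auto. assert (2 ^ n <= 2 ^ k) by (apply Rle_pow; [lra|lia]).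
        assert (0 <= x ^ n) by (apply pow_le; lra). specialize (N1 n). nra.
      +
        assert (1 <= x ^ k) by (rewrite <- (pow1 k); apply pow_incr; lra).
        destruct k. lia. assert (1 < x ^ S k) by (apply Rlt_pow_R1; [lra|lia]).
        specialize (N1 (S k)). nra.
    - destruct k as [|k'].
      + lia.
      + replace n with (S k' + (n - S k'))%nat by lia.
        rewrite pow_add. specialize (Nsub (S k') (n - S k')%nat).
        assert (G := IH (n - S k')%nat ltac:(lia)).
        assert (0 <= x ^ S k') by (apply pow_le; lra).
        assert (0 <= x ^ (n - S k')) by (apply pow_le; lra).
        assert (0 <= N (n - S k')%nat) by (specialize (N1 (n - S k')%nat); lra).
        assert (x ^ S k' * x ^ (n - S k') * N (S k' + (n - S k'))%nat <=
                (x ^ S k' * N (S k')) * (x ^ (n - S k') * N (n - S k')%nat)).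
        { rewrite <- Rmult_assoc. replace (x ^ S k' * N (S k') * x ^ (n - S k') * N (n - S k')%nat)
            with (x ^ S k' * x ^ (n - S k') * (N (S k') * N (n - S k')%nat)) by ring.
          apply Rmult_le_compat_l; [nra|auto]. }
        assert (0 <= x ^ (n - S k') * N (n - S k')%nat) by nra.
        nra. }
  assert (Eup : forall x, E x -> x <= / r).
  { intros x Ex. destruct (Rle_or_lt x (/ r)) as [|Hxr]; auto. exfalso.
    destruct Ex as [Hx [k [Hk Hxk]]].
    assert (0 < / r) by (apply Rinv_0_lt_compat; lra).
    assert (Hxr1 : 1 < x * r).
    { apply (Rmult_lt_compat_r r) in Hxr; [|lra]. rewrite Rinv_l in Hxr; lra. }
    destruct (INR_unbounded (2 ^ k / c / (x * r - 1))) as [K HK].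
    destruct (Hgrow K) as [n [Hn Hcn]].
    pose proof (Ebnd x k Hk Hx ltac:(lra) n) as Hb.
    pose proof (bernoulli (x * r - 1) n ltac:(lra)) as Hbe.
    replace (1 + (x * r - 1)) with (x * r) in Hbe by ring.
    rewrite Rpow_mult_distr in Hbe.
    assert (INR K <= INR n) by (apply le_INR; auto).
    assert (0 < x ^ n) by (apply pow_lt; lra).
    assert (c * (x ^ n * r ^ n) <= x ^ n * N n) by nra.
    assert (HK' : 2 ^ k < INR K * (x * r - 1) * c).
    { apply (Rmult_lt_compat_r ((x * r - 1) * c)) in HK; [|nra].
      replace (2 ^ k / c / (x * r - 1) * ((x * r - 1) * c)) with (2 ^ k) in HK by (field; nra).
      lra. }
    assert (INR K * (x * r - 1) * c <= INR n * (x * r - 1) * c).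
    { apply Rmult_le_compat_r; [lra|]. apply Rmult_le_compat_r; lra. }
    assert (INR n * (x * r - 1) * c <= c * (x ^ n * r ^ n)) by nra.
    lra. }
  assert (Ebound : bound E). { exists 1. intros x Ex. apply Eb in Ex. lra. }
  destruct (completeness E Ebound (ex_intro _ _ E4)) as [rho [Hub Hlub]].
  assert (Hrho1 : rho <= / r). { apply Hlub. intros x Ex; auto. }
  assert (Hr1 : / r < 1). { rewrite <- Rinv_1. apply Rinv_lt_contravar; lra. }
  assert (Hrho0 : 1/4 <= rho) by (apply Hub; auto).
  assert (Below : forall x, 0 < x < rho -> forall K, exists n, (K <= n)%nat /\ x ^ n * N n <= 1).
  { intros x Hx K.
    assert (Hy : exists y, E y /\ x < y).
    { apply NNPP; intro H. assert (rho <= x).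
      { apply Hlub. intros y Ey. destruct (Rle_or_lt y x); auto. exfalso; apply H; eauto. }
      lra. }
    destruct Hy as [y [[Hy0 [k [Hk Hyk]]] Hxy]].
    assert (Hxk : x ^ k * N k <= 1).
    { assert (x ^ k <= y ^ k) by (apply pow_incr; lra). specialize (N1 k). nra. }
    exists (K * k)%nat. split. nia.
    clear Hyk. induction K. simpl. rewrite N0; lra.
    change (S K * k)%nat with (k + K * k)%nat. rewrite pow_add.
    specialize (Nsub k (K * k)%nat).
    assert (0 <= x ^ k) by (apply pow_le; lra). assert (0 <= x ^ (K * k)) by (apply pow_le; lra).
    assert (0 <= N (K * k)%nat) by (specialize (N1 (K * k)%nat); lra).
    assert (x ^ k * x ^ (K * k) * N (k + K * k)%nat <= (x ^ k * N k) * (x ^ (K * k) * N (K * k)%nat)).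
    { replace ((x ^ k * N k) * (x ^ (K * k) * N (K * k)%nat)) with
        (x ^ k * x ^ (K * k) * (N k * N (K * k)%nat)) by ring.
      apply Rmult_le_compat_l; [nra|auto]. }
    assert (0 <= x ^ (K * k) * N (K * k)%nat) by nra. nra. }
  assert (Above : forall z, rho < z -> forall k, 1 <= z ^ k * N k).
  { intros z Hz [|k]. simpl; lra.
    destruct (Rle_or_lt 1 (z ^ S k * N (S k))) as [|H]; auto. exfalso.
    assert (E z) by (split; [lra|exists (S k); split; [lia|auto]]).
    assert (z <= rho) by (apply Hub; auto). lra. }
  assert (Hrho : 0 < rho < 1) by lra.
  destruct (cont_lb D rho (Dcont rho Hrho) (Dpos rho Hrho)) as [eta [Heta Hcl]].
  set (c0 := D rho / 2). assert (Hc0 : 0 < c0) by (unfold c0; pose proof (Dpos rho Hrho); lra).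
  set (B := (1 + 2 / c0) / (1 - rho)).
  destruct (INR_unbounded (2 * B)) as [K HK].
  assert (HK1 : (1 <= K)%nat).
  { destruct K; [|lia]. simpl in HK. assert (0 < B). { unfold B. apply Rdiv_lt_0_compat.
      assert (0 < 2 / c0) by (apply Rdiv_lt_0_compat; lra). lra. lra. } lra. }
  assert (HKp : 0 < INR K) by (apply lt_0_INR; lia).
  set (t := Rmin (eta / 2) (rho / (4 * INR K))).
  assert (Ht0 : 0 < t). { unfold t. apply Rmin_glb_lt. lra. apply Rdiv_lt_0_compat; lra. }
  assert (Ht1 : t <= eta / 2) by apply Rmin_l.
  assert (Ht2 : t <= rho / (4 * INR K)) by apply Rmin_r.
  assert (Ht3 : t <= rho / 4).
  { eapply Rle_trans; [exact Ht2|]. unfold Rdiv. apply Rmult_le_compat_l; [lra|].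
    apply Rinv_le_contravar; [lra|]. assert (1 <= INR K) by (apply (le_INR 1); auto). lra. }
  set (x := rho - t). set (z := rho + t).
  assert (Hx : 0 < x < 1) by (unfold x; lra).
  assert (HxE : 0 < x < rho) by (unfold x; lra).
  assert (HDx : c0 < D x) by (apply Hcl; unfold x; rewrite Rabs_left; lra).
  set (T := fun n => sumn (fun m => (N (S m) - N m) * x ^ m) n).
  assert (Tnn : forall m, 0 <= (N (S m) - N m) * x ^ m).
  { intro m. apply Rmult_le_pos. specialize (Nmono m); lra. apply pow_le; lra. }
  assert (TK : T K <= 2 / c0).
  { destruct (Below x HxE K) as [n [Hn Hxn]].
    assert (T K <= T n) by (apply sumn_mono; auto).
    assert (D x * T n <= 2) by (specialize (Hid x n Hx); unfold T; lra).
    assert (0 <= T K) by (apply sumn_nonneg; auto).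
    assert (T n <= 2 / c0).
    { apply (Rmult_le_reg_l c0); [lra|]. replace (c0 * (2 / c0)) with 2 by (field; lra).
      assert (0 <= T n) by lra. nra. }
    lra. }
  pose proof (abel N x K ltac:(lra)) as Hab. fold (T K) in Hab. rewrite N0 in Hab.
  set (P := sumn (fun m => N m * x ^ m) K) in Hab.
  assert (HNK : 0 <= N K * x ^ K) by (apply Rmult_le_pos; [specialize (N1 K); lra|apply pow_le; lra]).
  assert (HP1 : (1 - x) * P <= 1 + 2 / c0).
  { assert (x * T K <= 2 / c0). { assert (0 <= T K) by (apply sumn_nonneg; auto). nra. } lra. }
  assert (HP2 : INR K * (1/2) <= P).
  { apply sumn_ge. intros m Hm.
    assert (Hq : 1 - 1 / (2 * INR K) <= x / z).
    { unfold x, z. apply (Rmult_le_reg_r (rho + t)); [lra|].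
      replace ((rho - t) / (rho + t) * (rho + t)) with (rho - t) by (field; lra).
      assert (t * (4 * INR K) <= rho).
      { apply (Rmult_le_compat_r (4 * INR K)) in Ht2; [|lra].
        replace (rho / (4 * INR K) * (4 * INR K)) with rho in Ht2 by (field; lra). lra. }
      assert ((1 - 1 / (2 * INR K)) * (rho + t) = rho + t - (rho + t) / (2 * INR K)) by (field; lra).
      rewrite H0. assert (2 * t <= (rho + t) / (2 * INR K)).
      { apply (Rmult_le_reg_r (2 * INR K)); [lra|].
        replace ((rho + t) / (2 * INR K) * (2 * INR K)) with (rho + t) by (field; lra). nra. }
      lra. }
    assert (Hz : rho < z) by (unfold z; lra).
    pose proof (Above z Hz m) as Hzm.
    assert (Nx : N m * x ^ m = (z ^ m * N m) * (x / z) ^ m).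
    { unfold Rdiv. rewrite Rpow_mult_distr, pow_inv.
      field. apply pow_nonzero. unfold z; lra. }
    rewrite Nx.
    assert (Hq0 : 0 <= x / z) by (apply Rdiv_le_0_compat; unfold x, z; lra).
    pose proof (bernoulli (x / z - 1) m ltac:(lra)) as Hb.
    replace (1 + (x / z - 1)) with (x / z) in Hb by ring.
    assert (INR m <= INR K) by (apply le_INR; lia).
    assert (1 / 2 <= 1 + INR m * (x / z - 1)).
    { assert (HH : INR m * (x / z - 1) >= - (INR K * (1 / (2 * INR K)))).
      { assert (x / z - 1 <= 0). { unfold x, z. apply (Rmult_le_reg_r (rho + t)); [lra|].
          replace ((( rho - t) / (rho + t) - 1) * (rho + t)) with (-2 * t) by (field; lra). lra. }
        assert (- (1 / (2 * INR K)) <= x / z - 1) by lra. 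
        assert (0 <= INR m) by apply pos_INR. nra. }
      replace (INR K * (1 / (2 * INR K))) with (1/2) in HH by (field; lra). lra. }
    assert (0 <= (x / z) ^ m) by (apply pow_le; auto). nra. }
  assert (HB : (1 - rho) * B = 1 + 2 / c0) by (unfold B; field; lra).
  assert ((1 - rho) * (INR K * (1 / 2)) <= (1 - x) * P) by (apply Rmult_le_compat; unfold x; lra).
  assert ((1 - rho) * B < (1 - rho) * (INR K * (1/2))) by (apply Rmult_lt_compat_l; lra).
  lra.
Qed.

Lemma Dd_cont a b x : -1 < x < 1 -> continuity_pt (Dd a b) x.
Proof.
  intro Hx. unfold Dd. apply continuity_pt_minus; apply proj_cont; auto.
Qed.

Lemma main_minus a b : admissible a b ->
  (exists c r, 0 < c /\ 1 < r /\ forall K, exists n, (K <= n)%nat /\ c * r ^ n <= Nc a b n) ->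
  exists x, 0 < x < 1 /\ proj x a = proj x b.
Proof.
  intros Had [c [r [Hc [Hr Hg]]]].
  apply NNPP; intro Hno.
  assert (Dpos : forall x, 0 < x < 1 -> 0 < Dd a b x).
  { intros x Hx. destruct (Rlt_or_le 0 (Dd a b x)) as [|Hle]; auto. exfalso.
    destruct (Req_dec (Dd a b x) 0) as [E|Hne].
    - apply Hno. exists x; split; auto. unfold Dd in E; lra.
    - destruct (Ranalysis5.IVT_interv (fun t => - Dd a b t) 0 x) as [z [Hz Ez]].
      + intros t Ht. apply continuity_pt_opp. apply Dd_cont. lra.
      + lra.
      + unfold Dd. rewrite !proj_zero. destruct Had as (Ha0&Ha1&Hb0&Hb1&_).
        rewrite Ha0, Hb0. lra.
      + lra.
      + apply Hno. exists z. assert (z <> 0).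
        { intro; subst. unfold Dd in Ez. rewrite !proj_zero in Ez.
          destruct Had as (Ha0&Ha1&Hb0&Hb1&_). rewrite Ha0, Hb0 in Ez. lra. }
        split; [lra|]. unfold Dd in Ez; lra. }
  apply (endgame (Nc a b) (Dd a b) c r).
  - apply Nc_0; auto.
  - intro; apply Nc_mono; auto.
  - intros; apply Nc_submult; auto.
  - intro; apply Nc_le_pow.
  - auto.
  - auto.
  - auto.
  - auto.
  - intros x Hx. apply Dd_cont; lra.
  - intros x n Hx. pose proof (identity a b x n Had Hx) as H.
    pose proof (Sg_lower a b x n Had Hx) as G.
    assert (0 <= x ^ n) by (apply pow_le; lra).
    assert (x ^ n * (- Nc a b n) <= x ^ n * Sg a b x n) by (apply Rmult_le_compat_l; auto).
    lra.
Qed.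

Lemma flip_flip w : flip (flip w) = w.
Proof. apply functional_extensionality; intro k; unfold flip; destruct (w k); auto. Qed.

Lemma in_co_flip a b w : in_co a b w <-> in_oc (flip b) (flip a) (flip w).
Proof. unfold in_co, in_oc. rewrite flip_lt, flip_le. tauto. Qed.

Lemma in_oc_flip a b w : in_oc a b w <-> in_co (flip b) (flip a) (flip w).
Proof. unfold in_co, in_oc. rewrite flip_lt, flip_le. tauto. Qed.

Lemma adm_flip a b : admissible a b -> admissible (flip b) (flip a).
Proof.
  intros (Ha0&Ha1&Hb0&Hb1&HA&HB). unfold flip.
  repeat split; try (rewrite ?Ha0, ?Ha1, ?Hb0, ?Hb1; reflexivity).
  - intros n H. apply (HB n). apply in_co_flip. exact H.
  - intros n H. apply (HA n). apply in_oc_flip. exact H.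
Qed.

Lemma plus_flip a b w : Omega_plus a b w <-> Omega_minus (flip b) (flip a) (flip w).
Proof.
  unfold Omega_plus, Omega_minus. split; intros H n G; apply (H n).
  - apply in_co_flip. exact G.
  - apply in_co_flip in G. exact G.
Qed.

Definition validp a b (u : list bool) := exists w, Omega_plus a b w /\ pref w (length u) = u.

Lemma validp_iff a b u : validp a b u <-> valid (flip b) (flip a) (map negb u).
Proof.
  split.
  - intros [w [H1 H2]]. exists (flip w). split. apply plus_flip; auto.
    rewrite length_map. unfold pref in *.
    transitivity (map negb (map w (seq 0 (length u)))). rewrite map_map; reflexivity.
    rewrite H2; reflexivity.
  - intros [w [H1 H2]]. exists (flip w). split.
    + apply plus_flip. rewrite flip_flip. auto.
    + rewrite length_map in H2. unfold pref in *.
      assert (map negb (map w (seq 0 (length u))) = map negb (map negb u)) by (rewrite H2; auto).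
      rewrite !map_map in H. rewrite (map_ext (fun x => negb (negb x)) (fun x => x)) in H.
      rewrite map_id in H. exact H. intro; destruct a0; auto.
Qed.

Lemma Ncp a b n : sumw n (fun u => ind (validp a b u)) = Nc (flip b) (flip a) n.
Proof.
  unfold Nc. rewrite <- (sumw_negb n (fun u => ind (valid (flip b) (flip a) u))). apply sumw_ext. intro u. apply ind_iff. apply validp_iff.
Qed.

Lemma length_filter_sum {A} (f : A -> bool) l :
  INR (length (filter f l)) = fold_right Rplus 0 (map (fun x => if f x then 1 else 0) l).
Proof.
  induction l; [simpl; auto|]. simpl filter. simpl map. simpl fold_right.
  destruct (f a); [simpl length; rewrite S_INR, IHl; ring|rewrite IHl; ring].
Qed.

Lemma card_bound a b n : INR (card_prefixes (Omega_ab a b) n) <=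
  Nc a b (S n) + sumw (S n) (fun u => ind (validp a b u)).
Proof.
  unfold card_prefixes. rewrite length_filter_sum. fold (sumw (S n) (fun l =>
    if (if excluded_middle_informative (exists w, Omega_ab a b w /\ prefix w n = l) then true else false)
    then 1 else 0)).
  unfold Nc. rewrite <- sumw_plus. apply sumw_le. intro l.
  destruct (excluded_middle_informative (exists w, Omega_ab a b w /\ prefix w n = l)) as [[w [[H|H] E]]|H].
  - rewrite (ind_true (valid a b l)). pose proof (ind_bounds (validp a b l)); lra.
    exists w; split; auto. rewrite <- E. unfold prefix. rewrite length_map, length_seq. reflexivity.
  - rewrite (ind_true (validp a b l)). pose proof (ind_bounds (valid a b l)); lra.
    exists w; split; auto. rewrite <- E. unfold prefix. rewrite length_map, length_seq. reflexivity.
  - pose proof (ind_bounds (valid a b l)). pose proof (ind_bounds (validp a b l)). lra.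
Qed.

Lemma exp_pow_nat d n : exp (INR n * d) = exp d ^ n.
Proof.
  induction n. simpl. rewrite Rmult_0_l, exp_0; auto.
  rewrite S_INR, Rmult_plus_distr_r, Rmult_1_l, exp_plus, IHn. simpl. ring.
Qed.

Lemma growth_ab a b : non_null a b ->
  exists d, 0 < d /\ forall K, exists n, (K <= n)%nat /\
    exp (INR n * d) <= INR (card_prefixes (Omega_ab a b) n).
Proof.
  unfold non_null, entropy. set (u := fun n => ln (INR (card_prefixes (Omega_ab a b) n)) / INR n).
  intro H.
  assert (Hd : exists d, 0 < d /\ forall K, exists n, (K <= n)%nat /\ d < u n).
  { destruct (ex_LimSup_seq u) as [l Hl]. rewrite (is_LimSup_seq_unique u l Hl) in H.
    destruct l as [l| |]; simpl in H, Hl.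
    - exists (l / 2). split; [lra|]. intro K. assert (Hp : 0 < l / 2) by lra.
      destruct (Hl (mkposreal _ Hp)) as [H1 _]. destruct (H1 K) as [n [Hn G]]. simpl in G.
      exists n; split; auto. lra.
    - exists 1. split; [lra|]. intro K. apply Hl.
    - contradiction. }
  destruct Hd as [d [Hd HK]]. exists d. split; auto. intro K.
  destruct (HK (S K)) as [n [Hn G]]. exists n. split; [lia|].
  unfold u in G. set (m := INR (card_prefixes (Omega_ab a b) n)) in G.
  assert (Hn0 : 0 < INR n) by (apply lt_0_INR; lia).
  assert (G' : INR n * d < ln m).
  { apply (Rmult_lt_compat_l (INR n)) in G; auto. unfold Rdiv in G.
    replace (INR n * (ln m * / INR n)) with (ln m) in G by (field; lra). lra. }
  assert (Hm : 0 < m).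
  { destruct (Rlt_or_le 0 m) as [|Hm]; auto. exfalso.
    unfold ln in G'. destruct (Rlt_dec 0 m); [lra|]. nra. }
  change (exp (INR n * d) <= m). rewrite <- (exp_ln m Hm). left. apply exp_increasing. auto.
Qed.

Lemma growth_conv (N : nat -> R) d : 0 < d ->
  (forall K, exists n, (K <= n)%nat /\ exp (INR n * d) / 2 <= N (S n)) ->
  exists c r, 0 < c /\ 1 < r /\ forall K, exists n, (K <= n)%nat /\ c * r ^ n <= N n.
Proof.
  intros Hd H. assert (Hr : 1 < exp d) by (rewrite <- exp_0; apply exp_increasing; auto).
  exists (/ (2 * exp d)), (exp d). split; [apply Rinv_0_lt_compat; lra|split; auto].
  intro K. destruct (H K) as [n [Hn G]]. exists (S n). split; [lia|].
  rewrite exp_pow_nat in G. simpl pow. replace (/ (2 * exp d) * (exp d * exp d ^ n)) with (exp d ^ n / 2).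
  auto. field. lra.
Qed.

Theorem theorem3 (alpha beta : Omega) :
  admissible alpha beta -> non_null alpha beta ->
  exists x : R, 0 < x < 1 /\ proj x alpha = proj x beta.
Proof.
  intros Had Hnn. destruct (growth_ab alpha beta Hnn) as [d [Hd HK]].
  destruct (classic (forall K, exists n, (K <= n)%nat /\ exp (INR n * d) / 2 <= Nc alpha beta (S n)))
    as [H|H].
  - apply main_minus; auto. apply (growth_conv _ d); auto.
  - apply not_all_ex_not in H. destruct H as [K0 H0].
    destruct (main_minus (flip beta) (flip alpha) (adm_flip _ _ Had)) as [x [Hx E]].
    + apply (growth_conv _ d); auto. intro K.
      destruct (HK (max K K0)) as [n [Hn G]]. exists n. split; [lia|].
      pose proof (card_bound alpha beta n) as Hc. rewrite Ncp in Hc.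
      assert (Nc alpha beta (S n) < exp (INR n * d) / 2).
      { apply Rnot_le_lt. intro G'. apply H0. exists n. split; [lia|auto]. }
      lra.
    + exists x. split; auto. rewrite !proj_flip in E by lra. lra.
Qed.
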